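(* Let $\mathcal{A}$ be a separating union-closed family with base set $[n]$ and height $h=4$, and let $\mathcal{B}=\{B_1,B_2,B_3\}$ be a choice of $\mathcal{B}(\mathcal{A})$ with $|\mathcal{B}|=3$. Suppose $|B|=n$, where $B=b(\mathcal{A}_{<n/2})$. Then for every $A \in \mathcal{A}_{<n/2} \setminus \mathcal{B}$, we have $\bigcup_{i=1}^3 \mathrm{irr}_{\mathcal{B}}(B_i) \not\subseteq A$.
   Context: A family of sets $\mathcal{A}$ is union-closed if it is a finite family of distinct finite sets with at least one nonempty member set, and $X,Y\in\mathcal{A}$ implies $X\cup Y\in\mathcal{A}$ (the empty set may be a member). For a family $\mathcal{F}$, $b(\mathcal{F})=\bigcup_{F\in\mathcal{F}}F$; the base set $b(\mathcal{A})$ is denoted $[n]=\{1,\dots,n\}$. $\mathcal{A}$ is separating if for any two distinct $x,y\in[n]$ there is $A\in\mathcal{A}$ containing exactly one of $x,y$. A chain in $\mathcal{A}$ is a subfamily any two distinct members of which are comparable under proper inclusion; the height $h$ of $\mathcal{A}$ is the maximum size of a chain in $\mathcal{A}$. For real $x\ge 0$, $\mathcal{A}_{<x}=\{A\in\mathcal{A} : |A|<x\}$. For $\mathcal{S}\subseteq\mathcal{A}$ and $S\in\mathcal{S}$, $\mathrm{irr}_{\mathcal{S}}(S)=\{s\in S : s\notin b(\mathcal{S}\setminus\{S\})\}$, and $\mathcal{S}$ is irredundant if $\mathrm{irr}_{\mathcal{S}}(S)\neq\emptyset$ for every $S\in\mathcal{S}$. With $B=b(\mathcal{A}_{<n/2})$,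 $\mathcal{B}(\mathcal{A})$ denotes any irredundant subfamily of $\mathcal{A}_{<n/2}$ of minimum size such that $b(\mathcal{B}(\mathcal{A}))=B$. *)

(* Defs.v *)
(* Families of subsets of the base set [n], modelled as 'I_n. *)
From mathcomp Require Import all_boot.
Set Implicit Arguments. Unset Strict Implicit. Unset Printing Implicit Defensive.

Section UC.
Variable T : finType.
Implicit Types (A S C : {set {set T}}) (X Y : {set T}).

Definition base A : {set T} := \bigcup_(X in A) X.

Definition union_closed A : Prop :=
  (exists2 X, X \in A & X != set0) /\
  (forall X Y, X \in A -> Y \in A -> X :|: Y \in A).

Definition separating A : Prop :=
  forall x y : T, x != y -> exists2 X, X \in A & (x \in X) != (y \in X).

Definition is_chain C : bool :=
  [forall X in C, forall Y in C, (X != Y) ==> ((X \proper Y) || (Y \proper X))].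

Definition height A : nat := \max_(C in powerset A | is_chain C) #|C|.

(* A_{<x} for x = m/2 : members X with |X| < m/2, i.e. 2|X| < m *)
Definition A_lt_half A (m : nat) : {set {set T}} := [set X in A | #|X|.*2 < m].

Definition irr S X : {set T} := [set s in X | s \notin base (S :\ X)].

Definition irredundant S : Prop := forall X, X \in S -> irr S X != set0.

Definition is_calB A (m : nat) S : Prop :=
  [/\ S \subset A_lt_half A m, irredundant S,
      base S = base (A_lt_half A m) &
      forall S', S' \subset A_lt_half A m -> irredundant S' ->
                 base S' = base (A_lt_half A m) -> #|S| <= #|S'| ].
End UC.

(* Main.v *)
Require Import Defs.
From mathcomp Require Import all_boot.
From mathcomp Require Import zify.

Lemma sum_bool_card (T : finType) (U : {set T}) :
  \sum_(x : T) (x \in U : nat) = #|U|.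
Proof.
rewrite -sum1_card [RHS]big_mkcond /=; apply: eq_bigr => x _.
by case: (x \in U).
Qed.

Theorem propositionG (n : nat) (A S : {set {set 'I_n}}) :
  union_closed A -> base A = [set: 'I_n] -> separating A -> height A = 4 ->
  is_calB A n S -> #|S| = 3 ->
  #|base (A_lt_half A n)| = n ->
  forall X, X \in A_lt_half A n :\: S ->
    ~ (\bigcup_(Bi in S) irr S Bi \subset X).
Proof.
move=> _ _ _ _ [sSA _ bS _] cS cB X XS sUX.
set U := \bigcup_(Bi in S) irr S Bi.
have bT : base (A_lt_half A n) = [set: 'I_n].
  by apply/eqP; rewrite eqEcard subsetT /= cardsT card_ord cB.
have pt : forall x : 'I_n, 2 <= (x \in U) + \sum_(B in S) (x \in B).
  move=> x.
  have : x \in base S by rewrite bS bT inE.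
  case/bigcupP => Bi BiS xBi.
  rewrite (bigD1 Bi) //= xBi.
  case xI: (x \in irr S Bi).
    have -> : x \in U by apply/bigcupP; exists Bi.
    by lia.
  move: xI; rewrite /irr inE xBi /= => /negbFE /bigcupP [Bj].
  rewrite inE => /andP [BjBi BjS] xBj.
  rewrite (bigD1 Bj) /=; last by rewrite BjS; move: BjBi; rewrite inE.
  by rewrite xBj; lia.
have tot : 2 * n <= #|U| + \sum_(B in S) #|B|.
  have := @leq_sum _ (index_enum 'I_n) xpredT (fun _ => 2) _ (fun x _ => pt x).
  rewrite big_split /= sum_bool_card sum_nat_const cardE size_enum_ord.
  rewrite exchange_big /=.
  have -> : \sum_(j in S) \sum_(i : 'I_n) (i \in j : nat) = \sum_(j in S) #|j|.
    by apply: eq_bigr => j _; rewrite sum_bool_card.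
  by rewrite mulnC.
have hS : \sum_(B in S) #|B|.*2 <= \sum_(B in S) n.-1.
  apply: leq_sum => B BS.
  have := subsetP sSA B BS; rewrite inE => /andP [_ h]; lia.
rewrite sum_nat_const cS -(big_morph double doubleD double0) in hS.
have hU : #|U| <= #|X| by apply: subset_leq_card.
have := XS; rewrite !inE => /andP [_ /andP [_ hX]].
lia.
Qed.
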